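(* Let $\lambda>1$, $L=\ln\lambda$, and let $\alpha$ be Diophantine with constants $\kappa,\tau>0$. Fix $\Gamma$ with $L<\Gamma\le 2L$. For $n\in\mathbb{Z}$ let $$\Theta_1=\{\theta\in[0,1]:\ e^{-2\Gamma|n|}\le|\sin\pi(2\theta+n\alpha)|\le e^{-\Gamma|n|}\},$$ $$\Theta_2=\{\theta\in[0,1]:\ \text{there exists } k\in\mathbb{Z},\ |k|\ge 1000|n|,\ \text{with } |\sin\pi(2\theta+k\alpha)|\le e^{-\frac{L}{100}|k|}\},$$ and $\Theta=\Theta_1\setminus\Theta_2$. Then there is a constant $C=C(\kappa,\tau)$ such that, for $|n|$ sufficiently large, for every $\theta\in\Theta$ and every $m>C|n|$, $$\min_{|x|\le m}|\sin\pi(2\theta+x\alpha)|\ge e^{-\frac{L}{100}|m|}.$$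
   Context: The frequency $\alpha$ is Diophantine with constants $\kappa,\tau>0$ if $\|k\alpha\|_{\mathbb{R}/\mathbb{Z}}\ge \tau/|k|^{\kappa}$ for all integers $k\neq 0$, where $\|x\|_{\mathbb{R}/\mathbb{Z}}=\inf_{j\in\mathbb{Z}}|x-j|$. The minimum is over integers $x$. *)

(* Defs.v *)
From Stdlib Require Import Reals ZArith.
Open Scope R_scope.

(* ||x||_{R/Z} >= c, i.e. the infimum over j in Z of |x - j| is at least c. *)
Definition distZ_ge (x c : R) : Prop := forall j : Z, c <= Rabs (x - IZR j).

Definition diophantine (alpha kappa tau : R) : Prop :=
  0 < kappa /\ 0 < tau /\
  forall k : Z, k <> 0%Z ->
    distZ_ge (IZR k * alpha) (tau / Rpower (IZR (Z.abs k)) kappa).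

Definition Theta1 (Gamma alpha : R) (n : Z) (theta : R) : Prop :=
  0 <= theta <= 1 /\
  exp (- (2 * Gamma * IZR (Z.abs n))) <= Rabs (sin (PI * (2 * theta + IZR n * alpha))) /\
  Rabs (sin (PI * (2 * theta + IZR n * alpha))) <= exp (- (Gamma * IZR (Z.abs n))).

Definition Theta2 (L alpha : R) (n : Z) (theta : R) : Prop :=
  0 <= theta <= 1 /\
  exists k : Z, (Z.abs k >= 1000 * Z.abs n)%Z /\
    Rabs (sin (PI * (2 * theta + IZR k * alpha))) <= exp (- (L / 100 * IZR (Z.abs k))).

Definition Theta (L Gamma alpha : R) (n : Z) (theta : R) : Prop :=
  Theta1 Gamma alpha n theta /\ ~ Theta2 L alpha n theta.

(* Main.v *)
Require Import Defs.
From Stdlib Require Import Reals Lra Lia Psatz ZArith.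
Open Scope R_scope.

Lemma my_exp_le x y : x <= y -> exp x <= exp y.
Proof. intros [H|H]; [left; apply exp_increasing; auto | subst; lra]. Qed.

Lemma my_ln_le x y : 0 < x -> x <= y -> ln x <= ln y.
Proof. intros Hx [H|H]; [left; apply ln_increasing; auto | subst; lra]. Qed.

Lemma ln_le_id y : 0 < y -> ln y <= y - 1.
Proof. intros Hy. pose proof (exp_ineq1_le (ln y)). rewrite exp_ln in H; lra. Qed.

Lemma sin_lin_lb a : 0 <= a -> a <= 2 -> a / 3 <= sin a.
Proof.
  intros H0 H2.
  pose proof PI2_3_2.
  destruct (sin_bound a 0 H0 ltac:(lra)) as [Hs _].
  unfold sin_approx, sin_term in Hs. simpl in Hs.
  eapply Rle_trans; [|exact Hs]. nra.
Qed.

Lemma sin_abs_lb z : Rabs z <= 1/2 -> PI * Rabs z <= 3 * Rabs (sin (PI * z)).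
Proof.
  intros Hz. pose proof PI_4. pose proof PI_RGT_0.
  destruct (Rle_or_lt 0 z) as [Hz0|Hz0].
  - rewrite Rabs_right in * by lra.
    assert (0 <= PI * z) by nra. assert (PI*z <= 2) by nra.
    pose proof (sin_lin_lb _ H1 H2). rewrite Rabs_right; lra.
  - rewrite Rabs_left in * by lra.
    replace (PI * z) with (- (PI * -z)) by ring. rewrite sin_neg, Rabs_Ropp.
    assert (0 <= PI * - z) by nra. assert (PI* - z <= 2) by nra.
    pose proof (sin_lin_lb _ H1 H2). rewrite Rabs_right; lra.
Qed.

Lemma jordan d : exists j : Z, PI * Rabs (d - IZR j) <= 3 * Rabs (sin (PI * d)).
Proof.
  destruct (archimed (d + 1/2)) as [H1 H2].
  exists (up (d + 1/2) - 1)%Z.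
  rewrite minus_IZR.
  set (z := d - (IZR (up (d + 1 / 2)) - 1)).
  set (j := (up (d + 1 / 2) - 1)%Z).
  assert (Hd : PI * d = PI * z + IZR j * PI).
  { unfold z, j. rewrite minus_IZR. ring. }
  assert (Hs : sin (IZR j * PI) = 0) by (apply sin_eq_0_1; eauto).
  assert (Hc : Rabs (cos (IZR j * PI)) = 1).
  { pose proof (sin2_cos2 (IZR j * PI)). rewrite Hs in H. unfold Rsqr in H.
    destruct (Rle_or_lt 0 (cos (IZR j * PI))).
    - rewrite Rabs_right by lra. nra.
    - rewrite Rabs_left by lra. nra. }
  rewrite Hd, sin_plus, Hs, Rmult_0_r, Rplus_0_r, Rabs_mult, Hc, Rmult_1_r.
  apply sin_abs_lb. unfold z. apply Rabs_le. lra.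
Qed.
Lemma asym L kappa tau : 0 < L -> 0 < kappa -> 0 < tau ->
  exists N : Z, (1 <= N)%Z /\ forall t : R, IZR N <= t ->
    2 * exp (- (L * t)) * Rpower (1001 * t) kappa < tau.
Proof.
  intros HL Hk Ht.
  set (d := L / (2002 * kappa)).
  assert (Hdp : 0 < d) by (unfold d; apply Rdiv_lt_0_compat; lra).
  set (K := - kappa * ln d - ln (tau / 2)).
  exists (Z.max 1 (up (2 * K / L))). split; [lia|].
  intros t Htn.
  assert (H1 : 1 <= t).
  { eapply Rle_trans; [|exact Htn]. apply IZR_le; lia. }
  assert (H2 : 2 * K / L < t).
  { destruct (archimed (2 * K / L)) as [A _]. eapply Rlt_le_trans; [exact A|].
    eapply Rle_trans; [|exact Htn]. apply IZR_le; lia. }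
  assert (HK : K < L * t / 2).
  { apply (Rmult_lt_compat_r L) in H2; auto.
    unfold Rdiv in H2. rewrite Rmult_assoc, Rinv_l, Rmult_1_r in H2 by lra. lra. }
  assert (Hln : ln (1001 * t) <= d * (1001 * t) - ln d).
  { replace (ln (1001 * t)) with (ln (d * (1001 * t)) - ln d).
    - pose proof (ln_le_id (d * (1001 * t)) ltac:(apply Rmult_lt_0_compat; lra)). lra.
    - rewrite ln_mult by lra. ring. }
  assert (Hdk : kappa * (d * (1001 * t)) = L * t / 2).
  { unfold d. field. lra. }
  unfold Rpower. rewrite Rmult_assoc, <- exp_plus.
  assert (E : - (L * t) + kappa * ln (1001 * t) < ln (tau / 2)).
  { apply (Rmult_le_compat_l kappa) in Hln; [|lra]. unfold K in HK. nra. }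
  apply exp_increasing in E. rewrite exp_ln in E by lra. lra.
Qed.

Theorem lemma4p2 :
  forall kappa tau : R, 0 < kappa -> 0 < tau ->
  exists C : R,
  forall (lambda alpha Gamma : R),
    1 < lambda ->
    diophantine alpha kappa tau ->
    ln lambda < Gamma -> Gamma <= 2 * ln lambda ->
    exists N : Z, forall n : Z, (N <= Z.abs n)%Z ->
      forall theta : R, Theta (ln lambda) Gamma alpha n theta ->
      forall m : Z, C * IZR (Z.abs n) < IZR m ->
      forall x : Z, (Z.abs x <= Z.abs m)%Z ->
        exp (- (ln lambda / 100 * IZR (Z.abs m)))
          <= Rabs (sin (PI * (2 * theta + IZR x * alpha))).
Proof.
  intros kappa tau Hk Ht. exists 1000.
  intros lambda alpha Gamma Hl Hd HG1 HG2.
  assert (HL : 0 < ln lambda).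
  { rewrite <- ln_1. apply ln_increasing; lra. }
  set (L := ln lambda) in *.
  destruct (asym L kappa tau HL Hk Ht) as [N [HN1 HN]].
  exists N. intros n Hn theta [[Hth [Hlo Hhi]] HT2] m Hm x Hx.
  set (t := IZR (Z.abs n)) in *.
  assert (Ht1 : IZR N <= t) by (apply IZR_le; lia).
  assert (Ht1' : 1 <= t) by (eapply Rle_trans; [|exact Ht1]; apply IZR_le; lia).
  assert (Hmpos : (0 < m)%Z) by (apply lt_IZR; lra).
  replace (Z.abs m) with m in * by lia.
  set (M := IZR m) in *.
  destruct (Z.eq_dec x n) as [Exn|Exn].
  { subst x. eapply Rle_trans; [|exact Hlo]. apply my_exp_le. nra. }
  destruct (Z_le_gt_dec (1000 * Z.abs n) (Z.abs x)) as [Hbig|Hsmall].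
  { apply Rnot_lt_le. intro Hlt. apply HT2. split; [exact Hth|].
    exists x. split; [lia|]. left. eapply Rlt_le_trans; [exact Hlt|].
    apply my_exp_le. assert (IZR (Z.abs x) <= M) by (apply IZR_le; lia).
    unfold Rdiv. nra. }
  apply Rnot_lt_le. intro Hlt.
  destruct Hd as [_ [_ Hd]].
  set (k := (x - n)%Z).
  assert (Hk0 : k <> 0%Z) by (unfold k; lia).
  specialize (Hd k Hk0).
  destruct (jordan (IZR k * alpha)) as [j Hj].
  specialize (Hd j).
  set (a := 2 * theta + IZR n * alpha) in *.
  set (b := 2 * theta + IZR x * alpha) in *.
  assert (Hkab : PI * (IZR k * alpha) = PI * b - PI * a).
  { unfold k, a, b. rewrite minus_IZR. ring. }
  rewrite Hkab, sin_minus in Hj.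
  assert (Hs : Rabs (sin (PI * b) * cos (PI * a) - cos (PI * b) * sin (PI * a))
     <= Rabs (sin (PI * b)) + Rabs (sin (PI * a))).
  { unfold Rminus. eapply Rle_trans; [apply Rabs_triang|].
    rewrite Rabs_Ropp, !Rabs_mult.
    assert (Rabs (cos (PI * a)) <= 1) by (apply Rabs_le; apply COS_bound).
    assert (Rabs (cos (PI * b)) <= 1) by (apply Rabs_le; apply COS_bound).
    pose proof (Rabs_pos (sin (PI * a))). pose proof (Rabs_pos (sin (PI * b))).
    nra. }
  set (E := exp (- (L * t))).
  assert (HE : 0 < E) by apply exp_pos.
  assert (E1 : exp (- (L / 100 * M)) <= E) by (apply my_exp_le; unfold Rdiv; nra).
  assert (E2 : exp (- (Gamma * t)) <= E) by (apply my_exp_le; nra).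
  set (D := Rabs (IZR k * alpha - IZR j)) in *.
  pose proof PI2_3_2.
  assert (HD : D < 2 * E) by nra.
  set (Rp := Rpower (IZR (Z.abs k)) kappa) in *.
  assert (HRp : 0 < Rp) by (unfold Rp, Rpower; apply exp_pos).
  assert (Hkb : IZR (Z.abs k) <= 1001 * t).
  { unfold t. rewrite <- mult_IZR. apply IZR_le. unfold k. lia. }
  assert (Hkp : 0 < IZR (Z.abs k)) by (apply IZR_lt; lia).
  assert (HRp2 : Rp <= Rpower (1001 * t) kappa).
  { unfold Rp, Rpower. apply my_exp_le. apply Rmult_le_compat_l; [lra|].
    apply my_ln_le; auto. }
  specialize (HN t Ht1).
  assert (tau <= D * Rp).
  { unfold Rdiv in Hd. apply (Rmult_le_compat_r Rp) in Hd; [|lra].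
    rewrite Rmult_assoc, Rinv_l, Rmult_1_r in Hd by lra. exact Hd. }
  fold E in HN.
  assert (0 <= D) by apply Rabs_pos.
  nra.
Qed.
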